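(* Let $\mathrm{SG}(n)$ denote the Sprague--Grundy value of a pile of $n$ tokens in the game $i\textsc{-Mark}(\{1\},\{2,3\})$. For every integer $n>0$ there exists an integer $i$ with $1\le i\le 4$ and $i\le n$ such that $\mathrm{SG}(n-i)=0$.
   Context: In the impartial game $i\textsc{-Mark}(\{1\},\{2,3\})$, played on a single pile of $n\ge0$ tokens, a move replaces $n$ by $n-1$ (if $n\ge 1$), or by $n/2$ if $n>0$ is even, or by $n/3$ if $n>0$ is divisible by $3$. The Sprague--Grundy value is defined recursively by $\mathrm{SG}(n)=\mathrm{mex}\{\mathrm{SG}(w): w \text{ an option of } n\}$, where $\mathrm{mex}(T)$ is the smallest nonnegative integer not in $T$. *)

(* Defs.v *)
From mathcomp Require Import all_boot.
Set Implicit Arguments. Unset Strict Implicit. Unset Printing Implicit Defensive.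

Definition options (n : nat) : seq nat :=
  (if 0 < n then [:: n.-1] else [::]) ++
  (if (0 < n) && (2 %| n) then [:: n %/ 2] else [::]) ++
  (if (0 < n) && (3 %| n) then [:: n %/ 3] else [::]).

(* mex: smallest natural number not in s (it is <= size s). *)
Definition mex (s : seq nat) : nat :=
  find (fun k => k \notin s) (iota 0 (size s).+1).

(* sg_table n = [:: SG 0; SG 1; ...; SG n]; all options of m are < m. *)
Fixpoint sg_table (n : nat) : seq nat :=
  match n with
  | 0 => [:: mex [::]]
  | m.+1 => let t := sg_table m in
            rcons t (mex [seq nth 0 t w | w <- options m.+1])
  end.

Definition SG (n : nat) : nat := nth 0 (sg_table n) n.

(* Sanity characterisation (recursive definition from the paper) *)
Definition SG_spec (f : nat -> nat) : Prop :=
  forall n, f n = mex [seq f w | w <- options n].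

(* Main.v *)
Require Import Defs.
From mathcomp Require Import all_boot.
From mathcomp Require Import zify.

Lemma size_tab n : size (sg_table n) = n.+1.
Proof. by elim: n => [|n IH] //=; rewrite size_rcons IH. Qed.

Lemma tab_prefix n k : k <= n -> nth 0 (sg_table n) k = SG k.
Proof.
elim: n k => [|n IH] k.
  by rewrite leqn0 => /eqP ->.
rewrite leq_eqVlt => /orP [/eqP -> //|Hk].
rewrite /= nth_rcons size_tab Hk; exact: IH.
Qed.

Lemma options_lt n w : w \in options n -> w < n.
Proof.
rewrite /options !mem_cat.
case: (ltnP 0 n) => Hn /=; last by rewrite in_nil.
case: (2 %| n) => /=; case: (3 %| n) => /=;
  rewrite ?in_cons ?in_nil ?orbF => Hw;
  repeat (case/orP: Hw => [/eqP ->|Hw]; first lia);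
  move/eqP: Hw => ->; lia.
Qed.

Lemma SG_rec n : SG n = mex [seq SG w | w <- options n].
Proof.
case: n => [|n]; first by [].
have -> : SG n.+1 = mex [seq nth 0 (sg_table n) w | w <- options n.+1].
  by rewrite /SG /= nth_rcons size_tab ltnn eqxx.
congr mex; apply/eq_in_map => w Hw.
apply: tab_prefix; have := @options_lt _ _ Hw; lia.
Qed.

Lemma mex0 s : (mex s == 0) = (0 \notin s).
Proof. by rewrite /mex /=; case: (0 \notin s). Qed.

Lemma zero_pred k : 0 < k -> SG k = 0 -> SG k.-1 != 0.
Proof.
move=> Hk H; apply/eqP => H1.
move: H; rewrite SG_rec => /eqP; rewrite mex0 => /negP; apply.
rewrite -H1; apply: map_f; rewrite /options Hk mem_cat in_cons eqxx //.
Qed.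

Lemma nz_opt k : 0 < k -> SG k != 0 -> SG k.-1 != 0 ->
  (2 %| k /\ SG (k %/ 2) = 0) \/ (3 %| k /\ SG (k %/ 3) = 0).
Proof.
move=> Hk H H1; move: H; rewrite SG_rec mex0 negbK => /mapP [w].
rewrite /options Hk /= ?mem_cat.
case D2: (2 %| k) => /=; case D3: (3 %| k) => /=;
  rewrite ?in_cons ?in_nil ?orbF => Hw E;
  repeat (case/orP: Hw => [/eqP Ew|Hw]; [subst w; first [by left|by right|by rewrite -E in H1]|]);
  move/eqP: Hw => Ew; subst w; first [by left|by right|by rewrite -E in H1].
Qed.

Theorem mainTheorem4 :
  forall n : nat, 0 < n -> exists i : nat, [/\ 1 <= i, i <= 4, i <= n & SG (n - i) = 0].
Proof.
move=> n Hn.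
case: (leqP n 4) => Hn4.
  by exists n; split => //; rewrite subnn.
have [H1|H1] := eqVneq (SG (n - 1)) 0; first by exists 1; split => //; lia.
have [H2|H2] := eqVneq (SG (n - 2)) 0; first by exists 2; split => //; lia.
have [H3|H3] := eqVneq (SG (n - 3)) 0; first by exists 3; split => //; lia.
have [H4|H4] := eqVneq (SG (n - 4)) 0; first by exists 4; split => //; lia.
exfalso.
have E1 : (n - 1).-1 = n - 2 by lia.
have E2 : (n - 2).-1 = n - 3 by lia.
have E3 : (n - 3).-1 = n - 4 by lia.
have A := @nz_opt (n - 1) ltac:(lia) H1; rewrite E1 in A; move: A => /(_ H2) A.
have B := @nz_opt (n - 2) ltac:(lia) H2; rewrite E2 in B; move: B => /(_ H3) B.
have C := @nz_opt (n - 3) ltac:(lia) H3; rewrite E3 in C; move: C => /(_ H4) C.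
case: A => [[dA zA]|[dA zA]]; case: B => [[dB zB]|[dB zB]];
  case: C => [[dC zC]|[dC zC]]; try lia.
have P : 0 < (n - 1) %/ 2 by lia.
have := @zero_pred _ P zA.
have -> : ((n - 1) %/ 2).-1 = (n - 3) %/ 2 by lia.
by rewrite zC.
Qed.
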